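(* Let $\Omega$, $d$ and the finite set $\mathbb{Y}\subset\Omega$ be as in the context. Given $x'_1,x'_2\in\Omega$, there exist points $y_1,\dots,y_{N}\in\mathbb{Y}$, $N=N(x'_1,x'_2)\ge1$, such that $\{x'_1,y_1,\dots,y_N,x'_2\}$ forms a zigzag in $\Omega$, i.e. $\overline{x'_1y_1}\subset\Omega$, $\overline{y_Nx'_2}\subset\Omega$, $\overline{y_iy_{i+1}}\subset\Omega$ for all $1\le i\le N-1$, and moreover $d(\overline{x'_1y_1},\partial\Omega)\ge\min\{d(x'_1,\partial\Omega),\frac d{10}\}$, $d(\overline{x'_2y_N},\partial\Omega)\ge\min\{d(x'_2,\partial\Omega),\frac d{10}\}$, and $d(\overline{y_iy_{i+1}},\partial\Omega)>\frac d{10}$ for $1\le i\le N-1$.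
   Context: $\Omega\subset\mathbb{R}^3$ is a connected bounded open set with $C^2$ boundary, $n$ the outward unit normal, $\Omega_\epsilon=\{x\in\Omega:d(x,\partial\Omega)<\epsilon\}$, $\overline{xy}=\{sx+(1-s)y:0\le s\le1\}$. There is $\delta(\Omega)>0$ such that for $0<d<\min\{1,\delta\}$ (fixed) there are $x_1^0,\dots,x_{m_1}^0\in\partial\Omega$ with $\partial\Omega\subset\bigcup_iB(x_i^0,d/8)$, and for each $i$ an orthonormal basis $\{e_i^1,e_i^2,-n(x_i^0)\}$ and a $C^2$ function $\phi_i:\mathbb{R}^2\to\mathbb{R}$ with $\phi_i(0)=0$, $\nabla\phi_i(0)=0$, $|\nabla\phi_i|<\frac1{100}$, such that in $B(x_i^0,3d)$ (open and closed) $\partial\Omega$ is the graph $\{x_i^0+u_1e_i^1+u_2e_i^2-\phi_i(u_1,u_2)n(x_i^0)\}$ and $\Omega$ is $\{u_3>\phi_i(u_1,u_2)\}$ in coordinates $x_i^0+u_1e_i^1+u_2e_i^2-u_3n(x_i^0)$, and $B(x_i^0-\frac d2n(x_i^0),\frac d2)\subset B(x_i^0,d)\cap\Omega$. Set $y_i^0:=x_i^0-\frac{3d}4n(x_i^0)$ for $1\le i\le m_1$, and let $y_{m_1+1}^0,\dots,y_{m_1+m_2}^0\in\Omega\setminus\Omega_{d/8}$ be the centers of a finite subcover, with minimal number of balls, of the cover $\{B(x,\frac d{16})\}_{x\in\Omega\setminus\Omega_{d/8}}$ of $\Omega\setminus\Omega_{d/8}$. Then $\mathbb{Y}:=\{y_i^0:1\le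 i\le m_1+m_2\}$. Such a zigzag is called a ''good zigzag'' from $x'_1$ to $x'_2$ with $N+1$ segments. *)

(* Defs.v *)
(* Points of R^3 are row vectors 'rV[R]_3 with the
   EUCLIDEAN norm defined below (the library norm on matrices is the max norm). *)
From HB Require Import structures.
From mathcomp Require Import all_boot all_order all_algebra.
From mathcomp Require Import all_classical all_reals all_analysis.
Set Implicit Arguments. Unset Strict Implicit. Unset Printing Implicit Defensive.
Import Order.TTheory GRing.Theory Num.Theory.
Import numFieldNormedType.Exports.
Local Open Scope classical_set_scope.
Local Open Scope ring_scope.

Section Defs.
Variable R : realType.
Notation pt := 'rV[R]_3.

Definition dot (u v : pt) : R := \sum_(k < 3) u ord0 k * v ord0 k.
Definition enorm (u : pt) : R := Num.sqrt (dot u u).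

Definition eball (x : pt) (r : R) : set pt := [set z | enorm (z - x) < r].

Definition bdry (A : set pt) : set pt := closure A `\` interior A.

Definition dist_pt (x : pt) (A : set pt) : R :=
  inf [set enorm (x - a) | a in A].
Definition dist_set (S A : set pt) : R :=
  inf [set r | exists x a, S x /\ A a /\ r = enorm (x - a)].

Definition seg (x y : pt) : set pt :=
  [set s *: x + (1 - s) *: y | s in `[0, 1]%classic].

Definition collar (O : set pt) (eps : R) : set pt :=
  [set x | O x /\ dist_pt x (bdry O) < eps].

Definition pdx (f : R * R -> R) (p : R * R) : R := derive1 (fun t => f (t, p.2)) p.1.
Definition pdy (f : R * R -> R) (p : R * R) : R := derive1 (fun t => f (p.1, t)) p.2.

Definition C1 (f : R * R -> R) : Prop :=
  continuous f /\
  (forall p : R * R, derivable (fun t => f (t, p.2)) p.1 1 /\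
                     derivable (fun t => f (p.1, t)) p.2 1) /\
  continuous (pdx f) /\ continuous (pdy f).

Definition C2 (f : R * R -> R) : Prop := C1 f /\ C1 (pdx f) /\ C1 (pdy f).

End Defs.

(* Main.v *)
Require Import Defs.
From HB Require Import structures.
From mathcomp Require Import all_boot all_order all_algebra.
From mathcomp Require Import all_classical all_reals all_analysis.
From mathcomp Require Import ring lra zify.
Import Order.TTheory GRing.Theory Num.Theory.
Import numFieldNormedType.Exports.
Local Open Scope classical_set_scope.
Local Open Scope ring_scope.

Section Euclid.
Context {R : realType}.
Notation pt := 'rV[R]_3.
Implicit Types u v w : pt.

Lemma dotE u v : dot u v = u ord0 0 * v ord0 0 + u ord0 1 * v ord0 1 + u ord0 2%:R * v ord0 2%:R.
Proof.
rewrite /dot !big_ord_recr big_ord0 /= add0r.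
by congr (_ * _ + _ * _ + _ * _); congr (_ ord0 _); apply/val_inj.
Qed.

Lemma dotC u v : dot u v = dot v u.
Proof. rewrite !dotE; ring. Qed.
Lemma dotDl u v w : dot (u + v) w = dot u w + dot v w.
Proof. rewrite !dotE !mxE; ring. Qed.
Lemma dotDr u v w : dot w (u + v) = dot w u + dot w v.
Proof. rewrite !dotE !mxE; ring. Qed.
Lemma dotNl u v : dot (- u) v = - dot u v.
Proof. rewrite !dotE !mxE; ring. Qed.
Lemma dotNr u v : dot u (- v) = - dot u v.
Proof. rewrite !dotE !mxE; ring. Qed.
Lemma dotBl u v w : dot (u - v) w = dot u w - dot v w.
Proof. by rewrite dotDl dotNl. Qed.
Lemma dotBr u v w : dot w (u - v) = dot w u - dot w v.
Proof. by rewrite dotDr dotNr. Qed.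
Lemma dotZl a u v : dot (a *: u) v = a * dot u v.
Proof. rewrite !dotE !mxE; ring. Qed.
Lemma dotZr a u v : dot u (a *: v) = a * dot u v.
Proof. rewrite !dotE !mxE; ring. Qed.
Lemma dot_ge0 u : 0 <= dot u u.
Proof. rewrite dotE; nra. Qed.

Lemma enorm_ge0 u : 0 <= enorm u.
Proof. exact: sqrtr_ge0. Qed.
Lemma enorm_sq u : enorm u ^+ 2 = dot u u.
Proof. by rewrite /enorm sqr_sqrtr // dot_ge0. Qed.

Lemma CS u v : dot u v ^+ 2 <= dot u u * dot v v.
Proof.
rewrite !dotE.
set a0 := u ord0 0; set a1 := u ord0 1; set a2 := u ord0 2%:R.
set b0 := v ord0 0; set b1 := v ord0 1; set b2 := v ord0 2%:R.
have h : (a0*b0+a1*b1+a2*b2)^+2 + ((a0*b1-a1*b0)^+2 + (a0*b2-a2*b0)^+2 + (a1*b2-a2*b1)^+2)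
   = (a0*a0+a1*a1+a2*a2)*(b0*b0+b1*b1+b2*b2) by ring.
by rewrite -h lerDl !addr_ge0 ?sqr_ge0.
Qed.

Lemma CSabs u v : `|dot u v| <= enorm u * enorm v.
Proof.
rewrite -(ler_pXn2r (n:=2)) ?nnegrE ?normr_ge0 ?mulr_ge0 ?enorm_ge0 //.
rewrite exprMn !enorm_sq -normrX ger0_norm ?sqr_ge0 //; exact: CS.
Qed.

Lemma enorm_triangle u v : enorm (u + v) <= enorm u + enorm v.
Proof.
rewrite -(ler_pXn2r (n:=2)) ?nnegrE ?addr_ge0 ?enorm_ge0 //.
rewrite enorm_sq dotDl !dotDr sqrrD !enorm_sq (dotC v u).
have := CSabs u v; rewrite ler_norml => /andP[_ h]; lra.
Qed.

Lemma enormZ a u : enorm (a *: u) = `|a| * enorm u.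
Proof.
rewrite /enorm dotZl dotZr mulrA sqrtrM; last by rewrite -expr2 sqr_ge0.
by rewrite -expr2 sqrtr_sqr.
Qed.

Lemma enormN u : enorm (- u) = enorm u.
Proof. by rewrite /enorm dotNl dotNr opprK. Qed.

Lemma enormB u v : enorm (u - v) = enorm (v - u).
Proof. by rewrite -enormN opprB. Qed.

Lemma enorm_dist u v w : enorm (u - w) <= enorm (u - v) + enorm (v - w).
Proof. have -> : u - w = (u - v) + (v - w) by rewrite addrA subrK. exact: enorm_triangle. Qed.

Lemma dot_unit_le u (e : pt) : dot e e = 1 -> `|dot u e| <= enorm u.
Proof. by move=> h; apply: le_trans (CSabs u e) _; rewrite /(enorm e) h sqrtr1 mulr1. Qed.

Lemma enorm_unit (e : pt) : dot e e = 1 -> enorm e = 1.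
Proof. by move=> h; rewrite /enorm h sqrtr1. Qed.

Lemma entry_le_enorm u (k : 'I_3) : `|u ord0 k| <= enorm u.
Proof.
pose e : pt := \row_(j < 3) (if j == k then 1 else 0).
have ee : dot e e = 1.
  rewrite dotE !mxE; case: k {e} => [[|[|[|k]]] hk] //=; rewrite ?mulr0 ?mulr1 ?addr0 ?add0r //.
have := dot_unit_le u e ee; congr (_ <= _); congr `|_|.
rewrite dotE !mxE; case: k {e ee} => [[|[|[|k]]] hk] //=; rewrite ?mulr0 ?mulr1 ?addr0 ?add0r //. all: by congr (u ord0 _); apply/val_inj.
Qed.

Lemma enorm_le_entries u : enorm u <= `|u ord0 0| + `|u ord0 1| + `|u ord0 2%:R|.
Proof.
rewrite -(ler_pXn2r (n:=2)) ?nnegrE ?addr_ge0 ?enorm_ge0 //.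
rewrite enorm_sq dotE.
set a := u ord0 0; set b := u ord0 1; set c := u ord0 2%:R.
rewrite -[a * a]expr2 -[b*b]expr2 -[c*c]expr2 -(real_normK (num_real a)) -(real_normK (num_real b)) -(real_normK (num_real c)).
have := normr_ge0 a; have := normr_ge0 b; have := normr_ge0 c; nra.
Qed.

End Euclid.

Section Topo.
Context {R : realType}.
Notation pt := 'rV[R]_3.
Implicit Types u v w a b : pt.

Lemma ball_entries (x y : pt) e : ball x e y -> forall k, `|x ord0 k - y ord0 k| < e.
Proof. by move=> [_ h] k; have := h ord0 k; rewrite /ball /=. Qed.

Lemma ball_enorm (x y : pt) e : ball x e y -> enorm (y - x) < 3 * e.
Proof.
move=> /ball_entries h; apply: le_lt_trans (enorm_le_entries _) _.
rewrite !mxE -!(distrC (x ord0 _)).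
have := h 0; have := h 1; have := h 2%:R; lra.
Qed.

Lemma open_eball (c : pt) r : open (eball c r).
Proof.
rewrite openE => w /= hw; apply/nbhs_ballP.
exists ((r - enorm (w - c)) / 3); first by rewrite /= divr_gt0 // subr_gt0.
move=> y /ball_enorm hy; rewrite /eball /=.
apply: le_lt_trans (enorm_dist _ w _) _.
move: hy; rewrite mulrC divfK //; rewrite /eball /= in hw; lra.
Qed.


Lemma itv01 (s : R) : `[0, 1]%classic s <-> 0 <= s <= 1.
Proof. by rewrite /= in_itv. Qed.

Lemma seg_sym a b : seg a b = seg b a.
Proof.
rewrite /seg; apply/seteqP; split => p [s hs <-]; exists (1 - s).
- move/itv01: hs => /andP[h0 h1]; apply/itv01; apply/andP; split; lra.
- rewrite (_ : 1 - (1 - s) = s); [exact: addrC | lra].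
- move/itv01: hs => /andP[h0 h1]; apply/itv01; apply/andP; split; lra.
- rewrite (_ : 1 - (1 - s) = s); [exact: addrC | lra].
Qed.

Lemma seg_left a b : seg a b a.
Proof.
exists 1; first by apply/itv01; rewrite ler01 lexx.
by rewrite subrr scale0r addr0 scale1r.
Qed.

Lemma seg_right a b : seg a b b.
Proof. by rewrite seg_sym; exact: seg_left. Qed.

Lemma seg_connected a b : connected (seg a b).
Proof.
apply: connected_continuous_connected; first exact: segment_connected.
apply: continuous_subspaceT => s.
apply: cvgD.
  by apply: cvgZl; apply: cvg_id.
by apply: cvgZl; apply: cvgB; [apply: cvg_cst | apply: cvg_id].
Qed.

Lemma bdry_notin (O : set pt) x : open O -> bdry O x -> ~ O x.
Proof. by move=> oO [_ hi] hx; apply: hi; move: oO; rewrite openE; apply. Qed.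

Lemma seg_in (O : set pt) a b : open O -> O a ->
  (forall p, seg a b p -> ~ bdry O p) -> seg a b `<=` O.
Proof.
move=> oO Oa hb.
have hBC : seg a b `&` O = seg a b `&` closure O.
  apply/seteqP; split => p [hp h]; split => //; first exact: subset_closure.
  apply: contrapT => nO; apply: (hb p hp); split => //.
  by move/interior_subset.
have h : seg a b `&` O = seg a b.
  apply: seg_connected.
  - by exists a; split => //; exact: seg_left.
  - by exists O.
  - by exists (closure O) => //; exact: closed_closure.
by move=> p hp; rewrite -h in hp; case: hp.
Qed.

Lemma entry_le_mxnorm (u : pt) k : `|u ord0 k| <= `|u|.
Proof.
rewrite leNgt; apply/negP => h.
have : ball (0 : pt) `|u ord0 k| u by rewrite -ball_normE /ball_ /= sub0r normrN.
by move/ball_entries => /(_ k); rewrite mxE sub0r normrN ltxx.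
Qed.

Lemma bdry_exists (O : set pt) x : open O -> bounded_set O -> O x -> exists q, bdry O q.
Proof.
move=> oO [M [Mr HM]] Ox.
have HK : forall z, O z -> `|z| <= `|M| + 1.
  move=> z Oz; apply: (HM (`|M| + 1)) => //.
  by apply: le_lt_trans (real_ler_norm Mr) _; rewrite ltrDl.
pose b : pt := x + (`|M| + `|x| + 2) *: const_mx 1.
have nOb : ~ O b.
  move=> /HK; apply/negP; rewrite -ltNge.
  apply: lt_le_trans (entry_le_mxnorm _ 0).
  rewrite !mxE mulr1.
  have h1 := entry_le_mxnorm x 0.
  set c := `|M| + `|x| + 2.
  have h2 : `|c| <= `|x ord0 0 + c| + `|x ord0 0|.
    by have := ler_normB (x ord0 0 + c) (x ord0 0); rewrite addrAC subrr add0r.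
  rewrite [`|c|]ger0_norm in h2; last by rewrite /c !addr_ge0.
  rewrite /c in h2 *.
  have h3 := normr_ge0 x; have h4 := normr_ge0 M; lra.
apply: contrapT => hn; apply: nOb.
apply: (@seg_in O x b oO Ox _ b (seg_right x b)) => p _ hp.
by apply: hn; exists p.
Qed.

End Topo.

Section Dist.
Context {R : realType}.
Notation pt := 'rV[R]_3.
Implicit Types u v w a b x : pt.

Lemma dist_pt_le x (A : set pt) a : A a -> dist_pt x A <= enorm (x - a).
Proof.
move=> Aa; apply: ge_inf; last by exists a.
by exists 0 => _ [a' _ <-]; exact: enorm_ge0.
Qed.

Lemma dist_pt_lt x (A : set pt) c : A !=set0 -> dist_pt x A < c ->
  exists a, A a /\ enorm (x - a) < c.
Proof.
move=> [a0 Aa0] /inf_lt [|_ [a Aa <-] h]; last by exists a.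
by exists (enorm (x - a0)); exists a0.
Qed.

Lemma dist_pt_nlt x (A : set pt) c : ~ (dist_pt x A < c) ->
  forall a, A a -> c <= enorm (x - a).
Proof.
move=> h a Aa; rewrite leNgt; apply/negP => hlt; apply: h.
exact: le_lt_trans (@dist_pt_le x A a Aa) hlt.
Qed.

Lemma dist_pt_ge x (A : set pt) c : A !=set0 ->
  (forall a, A a -> c <= enorm (x - a)) -> c <= dist_pt x A.
Proof.
move=> [a0 Aa0] h; apply: lb_le_inf; first by exists (enorm (x - a0)); exists a0.
by move=> _ [a Aa <-]; exact: h.
Qed.

Lemma dist_set_ge (S A : set pt) c : S !=set0 -> A !=set0 ->
  (forall p a, S p -> A a -> c <= enorm (p - a)) -> c <= dist_set S A.
Proof.
move=> [p0 Sp0] [a0 Aa0] h; apply: lb_le_inf.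
  by exists (enorm (p0 - a0)); exists p0, a0.
by move=> _ [p [a [Sp [Aa ->]]]]; exact: h.
Qed.

End Dist.

Section Lip.
Context {R : realType}.

Lemma lip1 (g : R -> R) L : (forall t, derivable g t 1) ->
  (forall t, `|derive1 g t| <= L) -> forall a b, `|g a - g b| <= L * `|a - b|.
Proof.
move=> dg hL.
have key : forall a b, a <= b -> `|g a - g b| <= L * `|a - b|.
  move=> a b ab.
  have [c _ hc] := @MVT_segment R g (derive1 g) a b ab
    (fun x _ => eq_ind _ (fun z => is_derive x 1 g z) (derivableP (dg x)) _ (esym (derive1E g x)))
    (derivable_within_continuous (fun x _ => dg x)).
  rewrite distrC hc normrM distrC; apply: ler_wpM2r => //.
move=> a b; have [ab|ba] := leP a b; first exact: key.
by rewrite distrC (distrC a); apply: key; exact: ltW.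
Qed.

Lemma abs_le_sqrt (x y : R) : `|x| <= Num.sqrt (x ^+ 2 + y ^+ 2).
Proof.
rewrite -sqrtr_sqr ler_sqrt; last by rewrite addr_ge0 ?sqr_ge0.
by rewrite lerDl sqr_ge0.
Qed.

Lemma lip2 (f : R * R -> R) L : C2 f ->
  (forall p, Num.sqrt (pdx f p ^+ 2 + pdy f p ^+ 2) < L) ->
  forall a1 a2 b1 b2, `|f (a1, a2) - f (b1, b2)| <= L * (`|a1 - b1| + `|a2 - b2|).
Proof.
move=> [[_ [hd _]] _] hL a1 a2 b1 b2.
have h1 : `|f (a1, a2) - f (b1, a2)| <= L * `|a1 - b1|.
  apply: (@lip1 (fun t => f (t, a2))) => [t|t].
    exact: (hd (t, a2)).1.
  apply: le_trans (ltW (hL (t, a2))); exact: abs_le_sqrt.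
have h2 : `|f (b1, a2) - f (b1, b2)| <= L * `|a2 - b2|.
  apply: (@lip1 (fun t => f (b1, t))) => [t|t].
    exact: (hd (b1, t)).2.
  apply: le_trans (ltW (hL (b1, t))); rewrite addrC; exact: abs_le_sqrt.
have := ler_normD (f (a1, a2) - f (b1, a2)) (f (b1, a2) - f (b1, b2)).
rewrite addrA subrK => h; apply: le_trans h _; rewrite mulrDr; exact: lerD.
Qed.

End Lip.

Section Geo.
Context {R : realType} {m1 : nat}.
Notation pt := 'rV[R]_3.
Variables (O : set pt) (d : R) (x0 e1 e2 nn : 'I_m1 -> pt) (phi : 'I_m1 -> R * R -> R).
Hypothesis oO : open O.
Hypothesis d0 : 0 < d.
Hypothesis ortho : forall i, dot (e1 i) (e1 i) = 1 /\ dot (e2 i) (e2 i) = 1 /\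
             dot (nn i) (nn i) = 1 /\ dot (e1 i) (e2 i) = 0 /\
             dot (e1 i) (nn i) = 0 /\ dot (e2 i) (nn i) = 0.
Hypothesis lip : forall i a1 a2 b1 b2,
  `|phi i (a1, a2) - phi i (b1, b2)| <= 1 / 100 * (`|a1 - b1| + `|a2 - b2|).
Hypothesis chart : forall i (w : 'rV[R]_3), enorm (w - x0 i) <= 3 * d ->
     let u1 := dot (w - x0 i) (e1 i) in
     let u2 := dot (w - x0 i) (e2 i) in
     let u3 := dot (w - x0 i) (- nn i) in
     (bdry O w <-> u3 = phi i (u1, u2)) /\
     (O w <-> u3 > phi i (u1, u2)).
Hypothesis cover : forall x, bdry O x -> exists i, eball (x0 i) (d / 8) x.

Definition U1 i w := dot (w - x0 i) (e1 i).
Definition U2 i w := dot (w - x0 i) (e2 i).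
Definition U3 i w := dot (w - x0 i) (- nn i).
Definition H i w := U3 i w - phi i (U1 i w, U2 i w).

Lemma chart_bdry i w : enorm (w - x0 i) <= 3 * d -> bdry O w -> H i w = 0.
Proof. by move=> /chart [[h _] _] /h; rewrite /H /U1 /U2 /U3 => ->; rewrite subrr. Qed.

Lemma chart_bdry' i w : enorm (w - x0 i) <= 3 * d -> H i w = 0 -> bdry O w.
Proof. by move=> /chart [[_ h] _] hw; apply: h; move/eqP: hw; rewrite subr_eq0 => /eqP. Qed.

Lemma chart_in i w : enorm (w - x0 i) <= 3 * d -> O w -> 0 < H i w.
Proof. by move=> /chart [_ [h _]] /h; rewrite /H subr_gt0. Qed.

Lemma dot_sub_x0 (a b c e : pt) : dot (a - c) e - dot (b - c) e = dot (a - b) e.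
Proof. rewrite !dotE !mxE; ring. Qed.

Lemma U_bound i w (e : pt) : dot e e = 1 -> `|dot (w - x0 i) e| <= enorm (w - x0 i).
Proof. exact: dot_unit_le. Qed.

Lemma unitN (e : pt) : dot e e = 1 -> dot (- e) (- e) = 1.
Proof. by rewrite dotNl dotNr opprK. Qed.

Lemma nn_unit i : enorm (nn i) = 1.
Proof. by have [_ [_ [h _]]] := ortho i; exact: enorm_unit. Qed.

Lemma deep_H i a : O a -> (forall q, bdry O q -> d / 8 <= enorm (a - q)) ->
  enorm (a - x0 i) <= 3 * d - d / 8 -> d / 8 <= H i a.
Proof.
move=> Oa ha hx.
have hin : enorm (a - x0 i) <= 3 * d by move: d0 hx; lra.
have Hpos := chart_in i a hin Oa.
rewrite leNgt; apply/negP => hlt.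
have [he1 [he2 [hnn [_ [h1n h2n]]]]] := ortho i.
pose a' := a + H i a *: nn i.
have da' : a' - x0 i = (a - x0 i) + H i a *: nn i by rewrite /a' addrAC.
have ea' : enorm (a' - x0 i) <= 3 * d.
  rewrite da'; apply: le_trans (enorm_triangle _ _) _.
  rewrite enormZ nn_unit mulr1 gtr0_norm //; lra.
have Ha' : H i a' = 0.
  rewrite {1}/H /U1 /U2 /U3 da' !(dotDl (a - x0 i)) !dotZl (dotC (nn i) (e1 i)) h1n (dotC (nn i) (e2 i)) h2n.
  rewrite (dotNr (nn i) (nn i)) hnn !mulr0 !addr0 /H /U1 /U2 /U3; ring.
have := ha a' (chart_bdry' i a' ea' Ha').
have -> : a - a' = - (H i a *: nn i) by rewrite /a' opprD addrA subrr add0r.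
rewrite enormN enormZ nn_unit mulr1 gtr0_norm //; lra.
Qed.

Lemma Uaff (a b c e : pt) s :
  dot (s *: a + (1 - s) *: b - c) e = s * dot (a - c) e + (1 - s) * dot (b - c) e.
Proof. rewrite !dotE !mxE; ring. Qed.

Lemma e1_unit i : dot (e1 i) (e1 i) = 1. Proof. by have [h _] := ortho i. Qed.
Lemma e2_unit i : dot (e2 i) (e2 i) = 1. Proof. by have [_ [h _]] := ortho i. Qed.
Lemma nnN_unit i : dot (- nn i) (- nn i) = 1.
Proof. by have [_ [_ [h _]]] := ortho i; apply: unitN. Qed.

Lemma Udiff_le i (p q e : pt) : dot e e = 1 -> `|dot (p - x0 i) e - dot (q - x0 i) e| <= enorm (p - q).
Proof. by move=> he; rewrite dot_sub_x0; exact: dot_unit_le. Qed.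

Lemma edge_far a b : O a -> O b ->
  (forall q, bdry O q -> d / 8 <= enorm (a - q)) ->
  (forall q, bdry O q -> d / 8 <= enorm (b - q)) ->
  enorm (a - b) < 2 * d ->
  forall p q, seg a b p -> bdry O q -> 41 * d / 400 <= enorm (p - q).
Proof.
have dpos := d0.
move=> Oa Ob ha hb hab _ q [s /itv01/andP[s0 s1] <-] bq.
rewrite leNgt; apply/negP => hpq.
have [i hi] := cover q bq; rewrite /eball /= in hi.
set p : pt := s *: a + (1 - s) *: b.
have hap : a - p = (1 - s) *: (a - b) by apply/rowP => k; rewrite !mxE; ring.
have hbp : b - p = s *: (b - a) by apply/rowP => k; rewrite !mxE; ring.
have eap : enorm (a - p) <= enorm (a - b).
  rewrite hap enormZ ger0_norm ?subr_ge0 //.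
  by rewrite ler_piMl ?enorm_ge0 // lerBlDr lerDl.
have ebp : enorm (b - p) <= enorm (a - b).
  by rewrite hbp enormZ ger0_norm // enormB ler_piMl ?enorm_ge0.
have epx : enorm (p - x0 i) < 41 * d / 400 + d / 8.
  by apply: le_lt_trans (enorm_dist _ q _) _; lra.
have ax : enorm (a - x0 i) <= 3 * d - d / 8.
  have : forall (X Y Z W : R), X <= Y + Z -> Y <= W -> W < 2 * d -> Z < 41 * d / 400 + d / 8 -> 0 < d -> X <= 3 * d - d / 8 by move=> X Y Z W; lra.
  by move=> /(_ _ _ _ _ (enorm_dist a p (x0 i)) eap hab epx d0).
have bx : enorm (b - x0 i) <= 3 * d - d / 8.
  by have := enorm_dist b p (x0 i); lra.
have Ha := deep_H i a Oa ha ax.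
have Hb := deep_H i b Ob hb bx.
have Hq : H i q = 0 by apply: (chart_bdry i q) bq; lra.
have hU1 := Uaff a b (x0 i) (e1 i) s.
have hU2 := Uaff a b (x0 i) (e2 i) s.
have hU3 := Uaff a b (x0 i) (- nn i) s.
rewrite -/p in hU1 hU2 hU3.
move: Ha Hb Hq; rewrite /H /U1 /U2 /U3.
set A1 := dot (a - x0 i) (e1 i); set A2 := dot (a - x0 i) (e2 i); set A3 := dot (a - x0 i) (- nn i).
set B1 := dot (b - x0 i) (e1 i); set B2 := dot (b - x0 i) (e2 i); set B3 := dot (b - x0 i) (- nn i).
set Q1 := dot (q - x0 i) (e1 i); set Q2 := dot (q - x0 i) (e2 i); set Q3 := dot (q - x0 i) (- nn i).
move=> Ha Hb Hq.
have dpq1 := Udiff_le i p q (e1 i) (e1_unit i); have dpq2 := Udiff_le i p q (e2 i) (e2_unit i).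
have dpq3 := Udiff_le i p q (- nn i) (nnN_unit i).
have dab1 := Udiff_le i a b (e1 i) (e1_unit i); have dab2 := Udiff_le i a b (e2 i) (e2_unit i).
rewrite hU1 hU2 hU3 -/A1 -/A2 -/A3 -/B1 -/B2 -/B3 -/Q1 -/Q2 -/Q3 in dpq1 dpq2 dpq3.
rewrite -/A1 -/A2 -/B1 -/B2 in dab1 dab2.
set P1 := s * A1 + (1 - s) * B1; set P2 := s * A2 + (1 - s) * B2.
have lPQ := lip i Q1 Q2 P1 P2.
have lPA := lip i P1 P2 A1 A2.
have lPB := lip i P1 P2 B1 B2.
have eA1 : `|P1 - A1| = (1 - s) * `|A1 - B1|.
  by rewrite distrC -[1 - s]ger0_norm ?subr_ge0 // -normrM; congr `|_|; rewrite /P1; ring.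
have eA2 : `|P2 - A2| = (1 - s) * `|A2 - B2|.
  by rewrite distrC -[1 - s]ger0_norm ?subr_ge0 // -normrM; congr `|_|; rewrite /P2; ring.
have eB1 : `|P1 - B1| = s * `|A1 - B1|.
  by rewrite -[s]ger0_norm // -normrM; congr `|_|; rewrite /P1; ring.
have eB2 : `|P2 - B2| = s * `|A2 - B2|.
  by rewrite -[s]ger0_norm // -normrM; congr `|_|; rewrite /P2; ring.
rewrite eA1 eA2 in lPA; rewrite eB1 eB2 in lPB.
set D := `|A1 - B1| + `|A2 - B2|.
have hD : D < 4 * d by rewrite /D; lra.
have D0 : 0 <= D by rewrite /D addr_ge0.
move: lPA lPB; rewrite ler_norml => /andP[_ lPA]; rewrite ler_norml => /andP[_ lPB].
move: lPQ; rewrite ler_norml => /andP[_ lPQ].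
have n1 : `|Q1 - P1| <= enorm (p - q).
  by rewrite distrC ler_norml; move: dpq1; rewrite -/P1 ler_norml.
have n2 : `|Q2 - P2| <= enorm (p - q).
  by rewrite distrC ler_norml; move: dpq2; rewrite -/P2 ler_norml.
move: dpq3; rewrite ler_norml => /andP[_ d3].
set fA := phi i (A1, A2) in Ha lPA *; set fB := phi i (B1, B2) in Hb lPB *.
set fP := phi i (P1, P2) in lPA lPB lPQ *; set fQ := phi i (Q1, Q2) in Hq lPQ *.
have k1 : s * (fP - fA) <= s * ((1 - s) * D / 100).
  apply: ler_wpM2l => //; apply: (le_trans lPA).
  by rewrite le_eqVlt; apply/orP; left; apply/eqP; rewrite /D; ring.
have k2 : (1 - s) * (fP - fB) <= (1 - s) * (s * D / 100).
  apply: ler_wpM2l; first lra.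
  apply: (le_trans lPB).
  by rewrite le_eqVlt; apply/orP; left; apply/eqP; rewrite /D; ring.
have k3 : s * (1 - s) <= 1 / 4.
  have h := sqr_ge0 (s - 1 / 2).
  have e : s * (1 - s) = 1 / 4 - (s - 1 / 2) ^+ 2 by field.
  rewrite e; lra.
have k4 : s * (1 - s) * D <= 1 / 4 * D by apply: ler_wpM2r.
have k5 : s * (d / 8) <= s * (A3 - fA) by apply: ler_wpM2l.
have k6 : (1 - s) * (d / 8) <= (1 - s) * (B3 - fB) by apply: ler_wpM2l; lra.
set L := s * (A3 - fA) + (1 - s) * (B3 - fB).
set M := s * (fP - fA) + (1 - s) * (fP - fB).
have eL : d / 8 <= L.
  have -> : d / 8 = s * (d / 8) + (1 - s) * (d / 8) by ring.
  exact: lerD.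
have eM : M <= D / 200.
  apply: le_trans (lerD k1 k2) _.
  have -> : s * ((1 - s) * D / 100) + (1 - s) * (s * D / 100) = (s * (1 - s) * D) / 50 by field.
  lra.
set X := s * A3 + (1 - s) * B3 in d3 *.
have eX : X - fP = L - M by rewrite /X /L /M; ring.
set E := enorm (p - q) in hpq n1 n2 d3 *.
have hpq' : E < 41 * d / 400 by [].
lra.
Qed.

Lemma sq_lower (e c : R) : 0 <= e -> 0 <= c -> c ^+ 2 <= e ^+ 2 -> c <= e.
Proof. by move=> he hc; rewrite (ler_pXn2r (n:=2)) ?nnegrE. Qed.

Lemma seg_dot_id (x z q : pt) s :
  dot (s *: x + (1 - s) *: z - q) (s *: x + (1 - s) *: z - q) =
  s * dot (x - q) (x - q) + (1 - s) * dot (z - q) (z - q) - s * (1 - s) * dot (x - z) (x - z).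
Proof. rewrite !dotE !mxE; ring. Qed.

Lemma deep_seg x z :
  (forall q, bdry O q -> d / 8 <= enorm (x - q)) ->
  (forall q, bdry O q -> d / 8 <= enorm (z - q)) ->
  enorm (x - z) < d / 16 ->
  forall p q, seg x z p -> bdry O q -> d / 10 <= enorm (p - q).
Proof.
have dpos := d0.
move=> hx hz hxz _ q [s /itv01/andP[s0 s1] <-] bq.
apply: sq_lower; [exact: enorm_ge0 | lra |].
rewrite enorm_sq seg_dot_id -!enorm_sq.
have ex := hx q bq; have ez := hz q bq.
have ex2 : (d / 8) ^+ 2 <= enorm (x - q) ^+ 2 by rewrite ler_pXn2r ?nnegrE ?enorm_ge0 //; lra.
have ez2 : (d / 8) ^+ 2 <= enorm (z - q) ^+ 2 by rewrite ler_pXn2r ?nnegrE ?enorm_ge0 //; lra.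
have exz2 : enorm (x - z) ^+ 2 <= (d / 16) ^+ 2.
  by rewrite ler_pXn2r ?nnegrE ?enorm_ge0 //; lra.
have k3 : s * (1 - s) <= 1 / 4.
  have h := sqr_ge0 (s - 1 / 2).
  have e : s * (1 - s) = 1 / 4 - (s - 1 / 2) ^+ 2 by field.
  rewrite e; lra.
have k0 : 0 <= s * (1 - s) by apply: mulr_ge0; lra.
have k5 : s * (d / 8) ^+ 2 <= s * enorm (x - q) ^+ 2 by apply: ler_wpM2l.
have k6 : (1 - s) * (d / 8) ^+ 2 <= (1 - s) * enorm (z - q) ^+ 2 by apply: ler_wpM2l; lra.
have k7 : s * (1 - s) * enorm (x - z) ^+ 2 <= s * (1 - s) * (d / 16) ^+ 2 by apply: ler_wpM2l.
have k8 : s * (1 - s) * (d / 16) ^+ 2 <= 1 / 4 * (d / 16) ^+ 2 by apply: ler_wpM2r; [exact: sqr_ge0|].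
set A := s * enorm (x - q) ^+ 2 in k5 *.
set B := (1 - s) * enorm (z - q) ^+ 2 in k6 *.
set C := s * (1 - s) * enorm (x - z) ^+ 2 in k7 *.
have e1' : s * (d / 8) ^+ 2 + (1 - s) * (d / 8) ^+ 2 = (d / 8) ^+ 2 by ring.
have e2' : (d / 10) ^+ 2 + 1 / 4 * (d / 16) ^+ 2 <= (d / 8) ^+ 2.
  rewrite !expr2; have := mulr_ge0 (ltW dpos) (ltW dpos); set dd := d * d.
  have -> : d / 10 * (d / 10) = dd / 100 by rewrite /dd; field.
  have -> : d / 16 * (d / 16) = dd / 256 by rewrite /dd; field.
  have -> : d / 8 * (d / 8) = dd / 64 by rewrite /dd; field.
  lra.
lra.
Qed.

Hypothesis ballin : forall i, eball (x0 i - (d / 2) *: nn i) (d / 2) `<=` eball (x0 i) d `&` O.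

Definition cpt i := x0 i - (3 * d / 4) *: nn i.

Lemma cpt_center i : enorm (cpt i - (x0 i - (d / 2) *: nn i)) = d / 4.
Proof.
have dpos := d0.
have -> : cpt i - (x0 i - (d / 2) *: nn i) = (- (d / 4)) *: nn i.
  by apply/rowP => k; rewrite /cpt !mxE; field.
by rewrite enormZ nn_unit mulr1 normrN gtr0_norm // divr_gt0.
Qed.

Lemma cpt_in i : O (cpt i).
Proof.
have dpos := d0.
have h : eball (x0 i - (d / 2) *: nn i) (d / 2) (cpt i) by rewrite /eball /= cpt_center; lra.
by have [] := ballin i (cpt i) h.
Qed.

Lemma cpt_far i q : bdry O q -> d / 4 <= enorm (cpt i - q).
Proof.
have dpos := d0.
move=> bq; rewrite leNgt; apply/negP => h.
have : (eball (x0 i - (d / 2) *: nn i) (d / 2)) q.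
  rewrite /eball /=; apply: le_lt_trans (enorm_dist _ (cpt i) _) _.
  by rewrite enormB cpt_center; lra.
by move=> hq; have [_ Oq] := ballin i q hq; exact: (bdry_notin O q oO bq Oq).
Qed.

Lemma near_seg (x q0 : pt) (r : R) : O x -> bdry O q0 -> enorm (x - q0) < d / 8 -> 0 < r -> r <= d / 10 ->
  (forall q, bdry O q -> r <= enorm (x - q)) ->
  exists i, enorm (x - cpt i) < d /\
    forall p q, seg x (cpt i) p -> bdry O q -> r <= enorm (p - q).
Proof.
have dpos := d0.
move=> Ox bq0 hxq0 r0 rd hr.
have [i hi] := cover q0 bq0; rewrite /eball /= in hi.
have hxx0 : enorm (x - x0 i) < d / 4 by have := enorm_dist x q0 (x0 i); lra.
have [he1 [he2 [hnn [_ [h1n h2n]]]]] := ortho i.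
set y := cpt i.
have ex0y : enorm (x0 i - y) = 3 * d / 4.
  have -> : x0 i - y = (3 * d / 4) *: nn i by apply/rowP => k; rewrite /y /cpt !mxE; ring.
  by rewrite enormZ nn_unit mulr1 gtr0_norm // divr_gt0 // mulr_gt0.
have hxy : enorm (x - y) < d by have := enorm_dist x (x0 i) y; lra.
exists i; split => // _ q [s /itv01/andP[s0 s1] <-] bq.
rewrite leNgt; apply/negP => hpq.
set t := 1 - s.
have t0 : 0 <= t by rewrite /t; lra.
have t1 : t <= 1 by rewrite /t; lra.
set q' : pt := q - t *: (y - x).
have eq' : x - q' = s *: x + (1 - s) *: y - q by apply/rowP => k; rewrite /q' /t !mxE; ring.
have Oq' : O q'.
  apply: (@seg_in _ O x q' oO Ox _ q' (seg_right x q')).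
  move=> _ [s' /itv01/andP[s0' s1'] <-] bw.
  have := hr _ bw.
  have -> : x - (s' *: x + (1 - s') *: q') = (1 - s') *: (x - q') by apply/rowP => k; rewrite !mxE; ring.
  rewrite enormZ ger0_norm ?subr_ge0 // eq'.
  have := enorm_ge0 (s *: x + (1 - s) *: y - q).
  set E := enorm (s *: x + (1 - s) *: y - q) in hpq *.
  move=> E0 h.
  have : (1 - s') * E <= E by rewrite ler_piMl // lerBlDr lerDl.
  lra.
have hq'x0 : enorm (q' - x0 i) <= 3 * d.
  have := enorm_dist q' x (x0 i); rewrite (enormB q' x) eq'; lra.
have Hq' := chart_in i q' hq'x0 Oq'.
have hqq' : q - q' = t *: (y - x) by rewrite /q' opprB addrC subrK.
have hqx0 : enorm (q - x0 i) <= 3 * d.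
  have := enorm_dist q q' (x0 i); rewrite hqq' enormZ ger0_norm // (enormB y x).
  have : t * enorm (x - y) <= enorm (x - y) by rewrite ler_piMl ?enorm_ge0.
  have hpq' : enorm (s *: x + (1 - s) *: y - q) < r by [].
  have := enorm_dist q' x (x0 i); rewrite (enormB q' x) eq'; lra.
have Hq := chart_bdry i q hqx0 bq.
have cq : forall e : pt, dot (q - x0 i) e = dot (q' - x0 i) e + t * dot (y - x) e.
  by move=> e; rewrite /q' !dotE !mxE; ring.
have yx : forall e : pt, dot (y - x) e = dot (y - x0 i) e - dot (x - x0 i) e.
  by move=> e; rewrite !dotE !mxE; ring.
have yx0 : forall e : pt, dot (y - x0 i) e = - (3 * d / 4) * dot (nn i) e.
  by move=> e; rewrite /y /cpt !dotE !mxE; ring.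
have V1b : `|dot (y - x) (e1 i)| <= d / 4.
  rewrite yx yx0 (dotC (nn i)) h1n mulr0 sub0r normrN.
  by apply: le_trans (ltW hxx0); apply: dot_unit_le.
have V2b : `|dot (y - x) (e2 i)| <= d / 4.
  rewrite yx yx0 (dotC (nn i)) h2n mulr0 sub0r normrN.
  by apply: le_trans (ltW hxx0); apply: dot_unit_le.
have V3b : d / 2 <= dot (y - x) (- nn i).
  rewrite yx yx0 dotNr hnn.
  have := dot_unit_le (x - x0 i) (- nn i) (nnN_unit i); rewrite ler_norml => /andP[_ h].
  lra.
move: Hq Hq'; rewrite /H /U1 /U2 /U3 !cq.
set Q1 := dot (q' - x0 i) (e1 i); set Q2 := dot (q' - x0 i) (e2 i); set Q3 := dot (q' - x0 i) (- nn i).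
set V1 := dot (y - x) (e1 i) in V1b *; set V2 := dot (y - x) (e2 i) in V2b *.
set V3 := dot (y - x) (- nn i) in V3b *.
have hl := lip i (Q1 + t * V1) (Q2 + t * V2) Q1 Q2.
have a1 : `|Q1 + t * V1 - Q1| = t * `|V1| by rewrite addrAC subrr add0r normrM ger0_norm.
have a2 : `|Q2 + t * V2 - Q2| = t * `|V2| by rewrite addrAC subrr add0r normrM ger0_norm.
rewrite a1 a2 ler_norml in hl; case/andP: hl => _ hl.
have k1 : t * (d / 2) <= t * V3 by apply: ler_wpM2l.
have k2 : t * `|V1| <= t * (d / 4) by apply: ler_wpM2l.
have k3 : t * `|V2| <= t * (d / 4) by apply: ler_wpM2l.
have k4 : 0 <= t * d by apply: mulr_ge0 => //; apply: ltW.
set fQ := phi i (Q1, Q2) in hl *.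
set fQ' := phi i (Q1 + t * V1, Q2 + t * V2) in hl *.
move=> Hq Hq'.
lra.
Qed.

Lemma far_pos x : O x -> exists e, 0 < e /\ forall q, bdry O q -> e <= enorm (x - q).
Proof.
move=> Ox; move: (oO); rewrite openE => /(_ x Ox) /nbhs_ballP [e /= e0 he].
exists e; split => // q bq; rewrite leNgt; apply/negP => hq.
apply: (bdry_notin O q oO bq); apply: he; split => // i k.
rewrite (ord1 i) /ball /=.
by apply: le_lt_trans hq; have := entry_le_enorm (x - q) k; rewrite !mxE.
Qed.

Definition far a := O a /\ forall q, bdry O q -> d / 8 <= enorm (a - q).

Definition Edge a b := seg a b `<=` O /\ d / 10 < dist_set (seg a b) (bdry O).

Lemma edge_ok a b : (exists q, bdry O q) -> far a -> far b -> enorm (a - b) < 2 * d -> Edge a b.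
Proof.
have dpos := d0.
move=> [q0 bq0] [Oa ha] [Ob hb] hab.
have key := edge_far a b Oa Ob ha hb hab.
split.
  apply: (@seg_in _ O a b oO Oa) => p hp bp.
  have := key p p hp bp; rewrite subrr /enorm dotE !mxE !mulr0 !addr0 sqrtr0; lra.
have hge : 41 * d / 400 <= dist_set (seg a b) (bdry O).
  apply: dist_set_ge.
  - by exists a; exact: seg_left.
  - by exists q0.
  - by move=> p q hp bq; exact: key.
lra.
Qed.

Lemma cpt_farP i : far (cpt i).
Proof.
have dpos := d0.
split; first exact: cpt_in.
by move=> q bq; have := cpt_far i q bq; lra.
Qed.

Variables (m2 : nat) (z : 'I_m2 -> pt).
Hypothesis zH : forall j, (O `\` collar O (d / 8)) (z j).
Hypothesis zcov : O `\` collar O (d / 8) `<=` \bigcup_(j in [set: 'I_m2]) eball (z j) (d / 16).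
Hypothesis bne : exists q, bdry O q.

Definition Yset y := (exists i, y = x0 i - (3 * d / 4) *: nn i) \/ (exists j, y = z j).

Lemma z_far j : far (z j).
Proof.
have [Oz nc] := zH j; split => //.
by apply: dist_pt_nlt => h; apply: nc; split.
Qed.

Lemma Y_far y : Yset y -> far y.
Proof. by case=> [[i ->]|[j ->]]; [exact: cpt_farP | exact: z_far]. Qed.

Lemma good_exists x : O x -> exists y, Yset y /\ enorm (x - y) < d /\ seg x y `<=` O /\
  Num.min (dist_pt x (bdry O)) (d / 10) <= dist_set (seg x y) (bdry O).
Proof.
have dpos := d0.
move=> Ox.
have [e [e0 he]] := far_pos x Ox.
have de : e <= dist_pt x (bdry O) by apply: dist_pt_ge.
set r := Num.min (dist_pt x (bdry O)) (d / 10).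
have rd : r <= d / 10 by rewrite /r ge_min lexx orbT.
have rdist : r <= dist_pt x (bdry O) by rewrite /r ge_min lexx.
have r0 : 0 < r by rewrite /r lt_min; apply/andP; split; [exact: lt_le_trans de | lra].
have hr : forall q, bdry O q -> r <= enorm (x - q).
  by move=> q bq; apply: le_trans rdist (dist_pt_le x (bdry O) q bq).
case: (pselect (dist_pt x (bdry O) < d / 8)) => hlt.
- have [q0 [bq0 hq0]] := dist_pt_lt x (bdry O) (d / 8) bne hlt.
  have [i [hxi hseg]] := near_seg x q0 r Ox bq0 hq0 r0 rd hr.
  exists (cpt i); split; first by left; exists i.
  split => //; split.
    apply: (@seg_in _ O x (cpt i) oO Ox) => p hp bp.
    have := hseg p p hp bp; rewrite subrr /enorm dotE !mxE !mulr0 !addr0 sqrtr0; lra.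
  apply: dist_set_ge; [by exists x; exact: seg_left | exact: bne |].
  by move=> p q hp bq; exact: hseg.
- have xc : (O `\` collar O (d / 8)) x by split => // -[].
  have [j _ hj] := zcov x xc; rewrite /eball /= in hj.
  have hfx : forall q, bdry O q -> d / 8 <= enorm (x - q) by exact: dist_pt_nlt.
  have [_ hfz] := z_far j.
  have key := deep_seg x (z j) hfx hfz hj.
  exists (z j); split; first by right; exists j.
  split; first lra.
  split.
    apply: (@seg_in _ O x (z j) oO Ox) => p hp bp.
    have := key p p hp bp; rewrite subrr /enorm dotE !mxE !mulr0 !addr0 sqrtr0; lra.
  apply: dist_set_ge; [by exists x; exact: seg_left | exact: bne |].
  by move=> p q hp bq; apply: le_trans rd (key p q hp bq).
Qed.

Definition chain y1 y := exists N (f : nat -> pt), (0 < N)%N /\ f 0%N = y1 /\ f N.-1 = y /\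
  (forall i, (i < N)%N -> Yset (f i)) /\ (forall i, (i.+1 < N)%N -> Edge (f i) (f i.+1)).

Lemma chain_refl y1 : Yset y1 -> chain y1 y1.
Proof. by move=> hy; exists 1%N, (fun _ => y1); do 3 split => //; split => // i. Qed.

Lemma chain_Y y1 y : chain y1 y -> Yset y.
Proof. by move=> [N [f [N0 [_ [<- [hY _]]]]]]; apply: hY; rewrite prednK. Qed.

Lemma chain_ext y1 y y' : chain y1 y -> Yset y' -> Edge y y' -> chain y1 y'.
Proof.
move=> [N [f [N0 [f0 [fN [hY hE]]]]]] Yy' E.
exists N.+1, (fun k => if (k < N)%N then f k else y').
split => //; split; first by rewrite N0.
split; first by rewrite /= ltnn.
split.
  move=> i hi; case: ifP => // hiN; exact: hY.
move=> i hi; case: ifP => hiN.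
  case: ifP => hiN'; first exact: hE.
  have -> : i = N.-1 by move: hiN hiN' hi; case: N {f0 fN hY hE} N0 => // n _ /=; lia.
  by rewrite fN.
exfalso; move: hiN hi; lia.
Qed.

Lemma connect_all y1 x1 : connected O -> O x1 -> Yset y1 -> enorm (x1 - y1) < d ->
  forall x, O x -> exists y, chain y1 y /\ enorm (x - y) < d.
Proof.
move=> hconn Ox1 Yy1 hx1 x Ox.
pose A := \bigcup_(y in chain y1) eball y d.
pose A' := \bigcup_(y in [set y | Yset y /\ ~ chain y1 y]) eball y d.
have eq : O `&` A = O.
  apply: hconn.
  - by exists x1; split => //; exists y1 => //; exact: chain_refl.
  - by exists A => //; apply: bigcup_open => y _; exact: open_eball.
  - exists (~` A').
      by rewrite closedC; apply: bigcup_open => y _; exact: open_eball.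
    apply/seteqP; split => w [Ow hw]; split => //.
      move: hw => [y cy hy] [y' [Yy' ncy'] hy']; apply: ncy'.
      apply: (chain_ext _ _ _ cy Yy'); apply: edge_ok => //.
      + exact: Y_far (chain_Y _ _ cy).
      + exact: Y_far.
      + rewrite /eball /= in hy hy'.
        have := enorm_dist y w y'; rewrite (enormB y w); lra.
    have [y [Yy [hwy _]]] := good_exists w Ow.
    case: (pselect (chain y1 y)) => cy; first by exists y.
    by exfalso; apply: hw; exists y.
have : (O `&` A) x by rewrite eq.
by move=> [_ [y cy hy]]; exists y.
Qed.

Lemma main_sec x1 x2 : connected O -> O x1 -> O x2 ->
  exists (N : nat) (y : nat -> pt),
    (0 < N)%N /\ (forall i, (i < N)%N -> Yset (y i)) /\
    seg x1 (y 0%N) `<=` O /\ seg (y N.-1) x2 `<=` O /\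
    (forall i, (i.+1 < N)%N -> seg (y i) (y i.+1) `<=` O) /\
    dist_set (seg x1 (y 0%N)) (bdry O) >= Num.min (dist_pt x1 (bdry O)) (d / 10) /\
    dist_set (seg (y N.-1) x2) (bdry O) >= Num.min (dist_pt x2 (bdry O)) (d / 10) /\
    (forall i, (i.+1 < N)%N -> dist_set (seg (y i) (y i.+1)) (bdry O) > d / 10).
Proof.
move=> hc Ox1 Ox2.
have [y1 [Yy1 [h1 [s1 m1']]]] := good_exists x1 Ox1.
have [y2 [Yy2 [h2 [s2 m2']]]] := good_exists x2 Ox2.
have [y [cy hy]] := connect_all y1 x1 hc Ox1 Yy1 h1 x2 Ox2.
have cy2 : chain y1 y2.
  apply: (chain_ext _ _ _ cy Yy2); apply: edge_ok => //.
  - exact: Y_far (chain_Y _ _ cy).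
  - exact: Y_far.
  - by have := enorm_dist y x2 y2; rewrite (enormB y x2); lra.
move: cy2 => [N [f [N0 [f0 [fN [hY hE]]]]]].
exists N, f; rewrite f0 fN (seg_sym y2 x2).
split => //; split => //; split => //; split => //.
split; first by move=> i /hE [].
split => //; split => //.
by move=> i /hE [].
Qed.

End Geo.

Theorem lemma2p6 (R : realType) (Omega : set 'rV[R]_3) (d : R)
  (m1 m2 : nat)
  (x0 e1 e2 nn : 'I_m1 -> 'rV[R]_3) (phi : 'I_m1 -> R * R -> R)
  (z : 'I_m2 -> 'rV[R]_3) :
  (* Omega: connected bounded open set with C^2 boundary (the C^2 regularity
     is encoded by the local C^2 graph charts below, which cover dOmega) *)
  open Omega -> connected Omega -> bounded_set Omega ->
  0 < d -> d < 1 ->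
  (forall i, bdry Omega (x0 i)) ->
  (forall x, bdry Omega x -> exists i, eball (x0 i) (d / 8) x) ->
  (* {e1, e2, -n} orthonormal *)
  (forall i, dot (e1 i) (e1 i) = 1 /\ dot (e2 i) (e2 i) = 1 /\
             dot (nn i) (nn i) = 1 /\ dot (e1 i) (e2 i) = 0 /\
             dot (e1 i) (nn i) = 0 /\ dot (e2 i) (nn i) = 0) ->
  (forall i, C2 (phi i) /\ phi i (0, 0) = 0 /\
             pdx (phi i) (0, 0) = 0 /\ pdy (phi i) (0, 0) = 0 /\
             (forall p, Num.sqrt (pdx (phi i) p ^+ 2 + pdy (phi i) p ^+ 2)
                          < 1 / 100)) ->
  (* graph description in the closed (hence also open) ball B(x0 i, 3d) *)
  (forall i (w : 'rV[R]_3), enorm (w - x0 i) <= 3 * d ->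
     let u1 := dot (w - x0 i) (e1 i) in
     let u2 := dot (w - x0 i) (e2 i) in
     let u3 := dot (w - x0 i) (- nn i) in
     (bdry Omega w <-> u3 = phi i (u1, u2)) /\
     (Omega w <-> u3 > phi i (u1, u2))) ->
  (forall i, eball (x0 i - (d / 2) *: nn i) (d / 2) `<=`
             eball (x0 i) d `&` Omega) ->
  (* z: centres of a minimal finite subcover of {B(x, d/16)}, x in Omega \ Omega_{d/8} *)
  (forall j, (Omega `\` collar Omega (d / 8)) (z j)) ->
  (Omega `\` collar Omega (d / 8) `<=` \bigcup_(j in [set: 'I_m2]) eball (z j) (d / 16)) ->
  (forall (k : nat) (w : 'I_k -> 'rV[R]_3),
     (forall j, (Omega `\` collar Omega (d / 8)) (w j)) ->
     (Omega `\` collar Omega (d / 8) `<=` \bigcup_(j in [set: 'I_k]) eball (w j) (d / 16)) ->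
     (m2 <= k)%N) ->
  let Y := [set y | (exists i, y = x0 i - (3 * d / 4) *: nn i) \/
                    (exists j, y = z j)] in
  forall x1 x2, Omega x1 -> Omega x2 ->
  exists (N : nat) (y : nat -> 'rV[R]_3),
    (0 < N)%N /\
    (forall i, (i < N)%N -> Y (y i)) /\
    seg x1 (y 0%N) `<=` Omega /\
    seg (y N.-1) x2 `<=` Omega /\
    (forall i, (i.+1 < N)%N -> seg (y i) (y i.+1) `<=` Omega) /\
    dist_set (seg x1 (y 0%N)) (bdry Omega) >= Num.min (dist_pt x1 (bdry Omega)) (d / 10) /\
    dist_set (seg (y N.-1) x2) (bdry Omega) >= Num.min (dist_pt x2 (bdry Omega)) (d / 10) /\
    (forall i, (i.+1 < N)%N -> dist_set (seg (y i) (y i.+1)) (bdry Omega) > d / 10).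
Proof.
move=> oO cO bO d0 d1 hx0 hcov ortho hphi chart ballin zH zcov zmin Y x1 x2 Ox1 Ox2.
have lip : forall i a1 a2 b1 b2,
  `|phi i (a1, a2) - phi i (b1, b2)| <= 1 / 100 * (`|a1 - b1| + `|a2 - b2|).
  move=> i; have [hC [_ [_ [_ hb]]]] := hphi i.
  exact: (lip2 (phi i) (1 / 100) hC hb).
have bne := bdry_exists Omega x1 oO bO Ox1.
exact: (@main_sec R m1 Omega d x0 e1 e2 nn phi oO d0 ortho lip chart hcov ballin m2 z zH zcov bne x1 x2 cO Ox1 Ox2).
Qed.
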